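(* For every odd prime power $q$ and every $n\ge 1$, $$S_q(n)=S^{o}_q(n)+S^{o}_q(n-1)\qquad\text{and}\qquad B_q(n)=\sum_{i=0}^{\lfloor n/2\rfloor} q^{i}\,S_q(n-2i),$$ where $S^{o}_q(0)=S_q(0)=1$.
   Context: Let $q$ be an odd prime power. For $f$ monic of degree $n$ in $\mathbb{F}_q[T]$ put $b_q(f)=1$ if $f=A^2+TB^2$ for some $A,B\in\mathbb{F}_q[T]$ and $0$ otherwise, and $B_q(n)=\sum_f b_q(f)$ over monic $f$ of degree $n$. Call a monic squarefree polynomial $f\in\mathbb{F}_q[T]$ admissible if every root $z\in\overline{\mathbb{F}}_q$ of $f$ is a square in $\mathbb{F}_q(z)$ (equivalently, $T$ is a square modulo every irreducible factor of $f$). $S_q(n)$ is the number of admissible monic squarefree polynomials of degree $n$, and $S^{o}_q(n)$ the number of those with $f(0)\neq 0$. *)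

(* Defs.v *)
From HB Require Import structures.
From Stdlib Require Import ClassicalEpsilon.
From mathcomp Require Import all_boot all_order all_algebra all_field.
Set Implicit Arguments. Unset Strict Implicit. Unset Printing Implicit Defensive.
Import GRing.Theory.
Local Open Scope ring_scope.

Definition decP (P : Prop) : bool :=
  if excluded_middle_informative P then true else false.

(* The monic polynomial of degree n with lower coefficients c_0..c_{n-1}:
   c_0 + c_1 T + ... + c_{n-1} T^{n-1} + T^n.  This is a bijection between
   n.-tuple F and monic polynomials of degree n. *)
Definition mpoly (F : finFieldType) (n : nat) (c : n.-tuple F) : {poly F} :=
  Poly (rcons (tval c) 1).

Definition is_sum_AB (F : finFieldType) (f : {poly F}) : Prop :=
  exists A B : {poly F}, f = A ^+ 2 + 'X * B ^+ 2.

Definition squarefree_poly (F : finFieldType) (f : {poly F}) : Prop :=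
  forall g : {poly F}, (g * g %| f) -> (size g <= 1)%N.

Definition admissible (F : finFieldType) (f : {poly F}) : Prop :=
  f \is monic /\ squarefree_poly f /\
  forall p : {poly F}, p \is monic -> irreducible_poly p -> p %| f ->
    exists g : {poly F}, p %| g ^+ 2 - 'X.

Definition Bq (F : finFieldType) (n : nat) : nat :=
  #|[set c : n.-tuple F | decP (is_sum_AB (mpoly c))]|.

Definition Sq (F : finFieldType) (n : nat) : nat :=
  #|[set c : n.-tuple F | decP (admissible (mpoly c))]|.

Definition Soq (F : finFieldType) (n : nat) : nat :=
  #|[set c : n.-tuple F | decP (admissible (mpoly c) /\ (mpoly c).[0] != 0)]|.

(* Main.v *)
From Pilot Require Import Defs.
From Stdlib Require Import Classical ClassicalEpsilon.
From HB Require Import structures.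
From mathcomp Require Import all_boot all_order all_algebra all_field.
From mathcomp Require Import ring zify.

Import Pilot.Defs.
Set Implicit Arguments. Unset Strict Implicit. Unset Printing Implicit Defensive.
Import GRing.Theory.

Section Work.
Local Open Scope ring_scope.
Variable F : finFieldType.
Implicit Types p q r f g h A B D : {poly F}.

Lemma decPP (P : Prop) : reflect P (decP P).
Proof. rewrite /decP; case: excluded_middle_informative => H; by constructor. Qed.

Lemma irr_dvdM p a b : irreducible_poly p -> p %| a * b -> (p %| a) || (p %| b).
Proof.
move=> ip dab; case pa: (p %| a) => //=.
have cp : coprimep p a by rewrite irreducible_poly_coprime // pa.
by rewrite -(Gauss_dvdpr b cp).
Qed.

Lemma irr_eqp p q : irreducible_poly p -> q %= p -> irreducible_poly q.
Proof.
move=> [sp ip] epq; split; first by rewrite (eqp_size epq).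
move=> r sr rq; have rp : r %| p by rewrite -(eqp_dvdr _ epq).
by apply: eqp_trans (ip r sr rp) _; rewrite eqp_sym.
Qed.

Definition mon p := (lead_coef p)^-1 *: p.

Lemma mon_monic p : p != 0 -> mon p \is monic.
Proof. by move=> p0; rewrite monicE lead_coefZ mulVf // lead_coef_eq0. Qed.

Lemma mon_eqp p : p != 0 -> mon p %= p.
Proof. by move=> p0; rewrite eqp_scale // invr_eq0 lead_coef_eq0. Qed.

Lemma irr_factor f : (1 < size f)%N ->
  exists p, [/\ p \is monic, irreducible_poly p & p %| f].
Proof.
have [n lt_fn] := ubnP (size f); elim: n f lt_fn => // n IHn f lt_fn sf.
have f0 : f != 0 by rewrite -size_poly_gt0; apply: ltn_trans sf.
case: (classic (irreducible_poly f)) => [irf|nirf].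
  exists (mon f); split; first exact: mon_monic.
    by apply: irr_eqp irf _; apply: mon_eqp.
  by rewrite (eqp_dvdl _ (mon_eqp f0)).
have [q [sq qf nq]] : exists q, [/\ size q != 1%N, q %| f & ~~ (q %= f)].
  apply: NNPP => H; apply: nirf; split=> // q sq qf.
  apply/negPn/negP => nq; apply: H; by exists q.
have q0 : q != 0 by apply: contra_neq f0 => q0; move: qf; rewrite q0 dvd0p => /eqP.
have lqf := dvdp_leq f0 qf.
have nqs : size q != size f by rewrite dvdp_size_eqp.
have sq1 : (1 < size q)%N.
  by move: sq q0; rewrite -size_poly_gt0; case: (size q) => [|[]].
have ltq : (size q < n)%N.
  by apply: leq_trans (_ : size q < size f)%N _; rewrite ?ltn_neqAle ?nqs ?lqf // -ltnS.
have [p [mp ip pq]] := IHn q ltq sq1.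
by exists p; split=> //; apply: dvdp_trans pq qf.
Qed.

Lemma rep_mul (a b : {poly F}) : is_sum_AB a -> is_sum_AB b -> is_sum_AB (a * b).
Proof.
move=> [A [B ->]] [C [D ->]]; exists (A*C - 'X*B*D), (A*D + B*C); ring.
Qed.

Lemma lead_sum A B : (A != 0) || (B != 0) ->
  exists2 s, s != 0 & lead_coef (A^+2 + 'X * B^+2) = s ^+ 2.
Proof.
have [->|A0] := eqVneq A 0; have [->|B0] := eqVneq B 0 => //= _.
- exists (lead_coef B); first by rewrite lead_coef_eq0.
  by rewrite expr0n /= add0r lead_coefM lead_coefX mul1r lead_coef_exp.
- exists (lead_coef A); first by rewrite lead_coef_eq0.
  by rewrite expr0n /= mulr0 addr0 lead_coef_exp.
have sA : size (A ^+ 2) = ((size A).-1 * 2).+1.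
  by rewrite -size_exp prednK // size_poly_gt0 expf_neq0.
have sB : size ('X * B ^+ 2) = ((size B).-1 * 2).+2.
  by rewrite mulrC size_mulX ?expf_neq0 // -size_exp prednK // size_poly_gt0 expf_neq0.
case: (leqP (size A).-1 (size B).-1) => H.
- exists (lead_coef B); first by rewrite lead_coef_eq0.
  rewrite lead_coefDr; last by rewrite sA sB; lia.
  by rewrite lead_coefM lead_coefX mul1r lead_coef_exp.
- exists (lead_coef A); first by rewrite lead_coef_eq0.
  rewrite lead_coefDl; last by rewrite sA sB; lia.
  by rewrite lead_coef_exp.
Qed.


Definition tup n f : n.-tuple F :=
  @Tuple n F (mkseq (fun i => f`_i) n) (introT eqP (size_mkseq _ _)).

Lemma tup_nth n f i : (i < n)%N -> (tup n f)`_i = f`_i.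
Proof. by move=> lt; rewrite /= nth_mkseq. Qed.

Lemma tup_inj_small n r (s : {poly F}) : (size r <= n)%N -> (size s <= n)%N ->
  tup n r = tup n s -> r = s.
Proof.
move=> sr ss e; apply/polyP => i; case: (ltnP i n) => H.
  by rewrite -(tup_nth r H) -(tup_nth s H) e.
by rewrite !nth_default // (leq_trans _ H).
Qed.

Lemma mpoly_seq n (c : n.-tuple F) : mpoly c = rcons c 1 :> seq F.
Proof. by rewrite /mpoly (@PolyK _ 0) // last_rcons oner_neq0. Qed.

Lemma size_mpoly n (c : n.-tuple F) : size (mpoly c) = n.+1.
Proof. by rewrite mpoly_seq size_rcons size_tuple. Qed.

Lemma coef_mpoly n (c : n.-tuple F) i :
  (mpoly c)`_i = if (i < n)%N then c`_i else if i == n then 1 else 0.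
Proof. by rewrite mpoly_seq nth_rcons size_tuple. Qed.

Lemma coef_mpoly_small n (c : n.-tuple F) i : (i < n)%N -> c`_i = (mpoly c)`_i.
Proof. by move=> lt; rewrite coef_mpoly lt. Qed.

Lemma mpoly_monic n (c : n.-tuple F) : mpoly c \is monic.
Proof. by rewrite monicE /lead_coef size_mpoly coef_mpoly ltnn eqxx. Qed.

Lemma mpolyK n (c : n.-tuple F) : tup n (mpoly c) = c.
Proof.
apply: val_inj => /=; apply: (@eq_from_nth _ 0); rewrite size_mkseq ?size_tuple //.
by move=> i lt; rewrite nth_mkseq // coef_mpoly lt.
Qed.

Lemma tupK n f : f \is monic -> size f = n.+1 -> mpoly (tup n f) = f.
Proof.
move=> mf sf; apply/polyP => i; rewrite coef_mpoly.
case: ltnP => H; first by rewrite tup_nth.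
case: eqP => [->|ne]; first by move/monicP: mf; rewrite /lead_coef sf.
by rewrite nth_default // sf; lia.
Qed.

Lemma Poly_tuple_inj k (x y : k.-tuple F) : Poly x = Poly y -> x = y.
Proof.
move=> e; apply: val_inj; apply: (@eq_from_nth _ 0); rewrite ?size_tuple // => i _.
by rewrite -(coef_Poly x) -(coef_Poly y) e.
Qed.

Lemma modp_eqP r (s : {poly F}) p : r %% p = s %% p -> p %| r - s.
Proof. by move=> e; rewrite /dvdp modpD modpN e subrr. Qed.

Lemma descent p g : p \is monic -> p %| g^+2 + 'X -> is_sum_AB p.
Proof.
move=> mp pg; have p0 := monic_neq0 mp.
have [d sp] : exists d, size p = d.+1 by exists (size p).-1; rewrite prednK // size_poly_gt0.
case: d sp => [|d] sp.
  exists 1, 0; rewrite expr1n expr0n /= mulr0 addr0.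
  move: mp; rewrite monicE /lead_coef sp /= => /eqP h.
  by rewrite (size1_polyC (eq_leq sp)) h.
have oh := odd_double_half d.+1; set a := (d.+1)./2 in oh.
have ob : (odd d.+1 <= 1)%N by case: odd.
set b := (d.+1 - a - 1)%N.
pose phi (x : (a.+1).-tuple F * (b.+1).-tuple F) : (d.+1).-tuple F :=
  tup d.+1 ((Poly x.1 - g * Poly x.2) %% p).
have : ~~ injectiveb phi.
  apply/negP => /injectiveP /leq_card; rewrite card_prod !card_tuple -expnD.
  have -> : (a.+1 + b.+1 = d.+2)%N by rewrite /b; lia.
  by rewrite leq_exp2l ?ltnn // card_finNzRing_gt1.
case/injectivePn => [[x1 y1] [[x2 y2] nxy e]].
set A := Poly x1 - Poly x2; set B := Poly y1 - Poly y2.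
have AB0 : (A != 0) || (B != 0).
  apply: contraR nxy; rewrite negb_or !negbK /A /B !subr_eq0 => /andP[/eqP e1 /eqP e2].
  by rewrite (Poly_tuple_inj e1) (Poly_tuple_inj e2).
have e' : (Poly x1 - g * Poly y1) %% p = (Poly x2 - g * Poly y2) %% p.
  by apply: tup_inj_small e; rewrite -ltnS -sp ltn_modp.
have pAB : p %| A - g * B.
  have -> : A - g * B = (Poly x1 - g * Poly y1) - (Poly x2 - g * Poly y2) by rewrite /A /B; ring.
  exact: modp_eqP.
set N := A ^+ 2 + 'X * B ^+ 2.
have pN : p %| N.
  have -> : N = (A - g * B) * (A + g * B) + B ^+ 2 * (g ^+ 2 + 'X) by rewrite /N; ring.
  by apply: dvdp_add; [apply: dvdp_mulr | apply: dvdp_mull].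
have [s s0 ls] := lead_sum AB0.
have N0 : N != 0 by rewrite -lead_coef_eq0 ls expf_neq0.
have sA : (size A <= a.+1)%N.
  apply: leq_trans (size_polyD _ _) _; rewrite size_polyN geq_max.
  by rewrite !(leq_trans (size_Poly _)) ?size_tuple.
have sB : (size B <= b.+1)%N.
  apply: leq_trans (size_polyD _ _) _; rewrite size_polyN geq_max.
  by rewrite !(leq_trans (size_Poly _)) ?size_tuple.
have sA2 : (size (A ^+ 2) <= (size A + size A).-1)%N by rewrite expr2 size_polyMleq.
have sB2 : (size (B ^+ 2) <= (size B + size B).-1)%N by rewrite expr2 size_polyMleq.
have sXB : (size ('X * B ^+ 2)%R <= (size ('X : {poly F}) + size (B ^+ 2)).-1)%N
  by rewrite size_polyMleq.
rewrite size_polyX in sXB.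
have sN : (size N <= d.+2)%N.
  apply: leq_trans (size_polyD _ _) _; rewrite geq_max.
  move: sA sB sA2 sB2 sXB; rewrite /b.
  move: (size A) (size B) (size (A^+2)) (size (B^+2)) (size ('X * B^+2)%R) => x y z u v.
  clearbody a; clear -oh ob => *; apply/andP; split; lia.
have eN : p %= N by rewrite -dvdp_size_eqp // eqn_leq (dvdp_leq N0 pN) sp.
have := eqp_eq eN; rewrite (monicP mp) scale1r ls => E.
exists (s^-1%:P * A), (s^-1%:P * B).
transitivity ((s^-1)%:P ^+ 2 * N); last by rewrite /N; ring.
rewrite -E -mul_polyC mulrA -rmorphXn -rmorphM -exprMn mulVf // expr1n.
by rewrite rmorph1 mul1r.
Qed.


Lemma monic_le1 p : p \is monic -> (size p <= 1)%N -> p = 1.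
Proof.
move=> mp sp; have p0 := monic_neq0 mp.
have s1 : size p = 1%N by apply/eqP; rewrite eqn_leq sp size_poly_gt0 p0.
by rewrite (size1_polyC sp); move/monicP: mp; rewrite /lead_coef s1 => ->.
Qed.

Lemma size_ltM (a b : {poly F}) : a != 0 -> (1 < size b)%N -> (size a < size (a * b)%R)%N.
Proof.
move=> a0 sb; have b0 : b != 0 by rewrite -size_poly_gt0 (ltn_trans _ sb).
rewrite size_mul //; rewrite -size_poly_gt0 in a0.
have H : forall x y : nat, (0 < x -> 1 < y -> x < (x + y).-1)%N by move=> *; lia.
exact: H.
Qed.

Lemma sq_prime D h p : squarefree_poly h -> irreducible_poly p ->
  p * p %| D ^+ 2 * h -> p %| D.
Proof.
move=> sqh ip H; apply/negPn/negP => npD.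
have cp : coprimep p D by rewrite irreducible_poly_coprime // npD.
have cpp : coprimep (p * p) (D ^+ 2) by rewrite coprimepMl coprimep_expr ?cp.
rewrite (Gauss_dvdpr h cpp) in H.
by have := sqh p H; case: ip => sp _; rewrite leqNgt sp.
Qed.

Lemma rep_split f : is_sum_AB f -> f != 0 -> forall D h p, f = D ^+ 2 * h ->
  squarefree_poly h -> irreducible_poly p -> p %| h -> exists g, p %| g ^+ 2 + 'X.
Proof.
have [n lt_fn] := ubnP (size f); elim: n f lt_fn => // n IHn f lt_fn.
move=> [A [B Ef]] f0 D h p Edh sqh ip ph.
have p0 := irredp_neq0 ip.
have pf : p %| f by rewrite Edh dvdp_mull.
case pB: (p %| B).
  have pA : p %| A.
    have : p %| A * A.
      have -> : A * A = f - 'X * (B * B) by rewrite Ef; ring.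
      by apply: dvdp_sub => //; apply: dvdp_mull; apply: dvdp_mulr.
    by move=> H; case/orP: (irr_dvdM ip H).
  have EA := divpK pA; have EB := divpK pB.
  set A' := A %/ p in EA; set B' := B %/ p in EB.
  set f' := A' ^+ 2 + 'X * B' ^+ 2.
  have Ef' : f = f' * (p * p) by rewrite Ef -EA -EB /f'; ring.
  have pD : p %| D by apply: (sq_prime sqh ip); rewrite -Edh Ef' dvdp_mull.
  have ED := divpK pD; set D' := D %/ p in ED.
  have f'0 : f' != 0 by apply: contra_neq f0; rewrite Ef' => ->; rewrite mul0r.
  have Ef'2 : f' = D' ^+ 2 * h.
    apply: (mulIf (mulf_neq0 p0 p0)); rewrite -Ef' Edh -ED; ring.
  have lt' : (size f' < n)%N.
    have : (size f' < size f)%N.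
      rewrite Ef'; apply: size_ltM => //; rewrite size_mul //.
      case: ip => sp _; move: sp.
      have H : forall x : nat, (1 < x -> 1 < (x + x).-1)%N by move=> *; lia.
      exact: H.
    by move=> H; apply: leq_trans H _; rewrite -ltnS.
  have rf' : is_sum_AB f' by exists A', B'.
  exact: (IHn f' lt' rf' f'0 D' h p Ef'2 sqh ip ph).
have cp : coprimep p B by rewrite irreducible_poly_coprime // pB.
case/Bezout_eq1_coprimepP: cp => [[u v] /= Huv].
exists (A * v).
have -> : (A * v) ^+ 2 + 'X = v ^+ 2 * f + 'X * (1 + v * B) * (u * p)
    + 'X * (1 + v * B) * (1 - (u * p + v * B)) by rewrite Ef; ring.
rewrite Huv subrr mulr0 addr0.
by apply: dvdp_add; apply: dvdp_mull => //; apply: dvdp_mull.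
Qed.

Lemma rep_adm h : h \is monic ->
  (forall p, p \is monic -> irreducible_poly p -> p %| h -> exists g, p %| g ^+ 2 + 'X) ->
  is_sum_AB h.
Proof.
have [n lt] := ubnP (size h); elim: n h lt => // n IHn h lt mh H.
case: (leqP (size h) 1) => sh.
  rewrite (monic_le1 mh sh); exists 1, 0; by rewrite expr1n expr0n /= mulr0 addr0.
have [p [mp ip ph]] := irr_factor sh.
have [g pg] := H p mp ip ph.
have Eh := divpK ph; set h' := h %/ p in Eh.
have mh' : h' \is monic by move: mh; rewrite -Eh monicMr.
rewrite -Eh; apply: rep_mul; last exact: descent pg.
apply: IHn => //.
  have : (size h' < size h)%N.
    by rewrite -Eh; apply: size_ltM; [apply: monic_neq0 | case: ip].
  by move=> H1; apply: leq_trans H1 _; rewrite -ltnS.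
move=> q mq iq qh'; apply: H => //; rewrite -Eh; exact: dvdp_mulr.
Qed.

Lemma sqf_decomp f : f \is monic ->
  exists D h, [/\ D \is monic, h \is monic, squarefree_poly h & f = D ^+ 2 * h].
Proof.
have [n lt] := ubnP (size f); elim: n f lt => // n IHn f lt mf.
case: (classic (squarefree_poly f)) => [sq|nsq].
  by exists 1, f; split; rewrite ?monic1 // expr1n mul1r.
have [g [gf sg]] : exists g, g * g %| f /\ (1 < size g)%N.
  apply: NNPP => H; apply: nsq => g gf; rewrite leqNgt; apply/negP => sg.
  by apply: H; exists g.
have g0 : g != 0 by rewrite -size_poly_gt0 (ltn_trans _ sg).
set m := mon g.
have mm : m \is monic by apply: mon_monic.
have mmf : m * m %| f by rewrite (eqp_dvdl _ (eqp_trans (eqp_mull m (mon_eqp g0)) (eqp_mulr g (mon_eqp g0)))).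
have Ef := divpK mmf; set f1 := f %/ (m * m) in Ef.
have mmm : m * m \is monic by rewrite monicMl.
have mf1 : f1 \is monic by move: mf; rewrite -Ef monicMr.
have sm : (1 < size (m * m)%R)%N.
  rewrite size_mul ?monic_neq0 // (eqp_size (mon_eqp g0)); move: sg.
  have H : forall x : nat, (1 < x -> 1 < (x + x).-1)%N by move=> *; lia.
  exact: H.
have lt1 : (size f1 < n)%N.
  have : (size f1 < size f)%N by rewrite -Ef; apply: size_ltM => //; apply: monic_neq0.
  by move=> H1; apply: leq_trans H1 _; rewrite -ltnS.
have [D1 [h [mD1 mh sqh Ef1]]] := IHn f1 lt1 mf1.
exists (m * D1), h; split => //; first by rewrite monicMl.
by rewrite -Ef Ef1; ring.
Qed.

Lemma sqf_uniq D1 D2 h1 h2 : D1 \is monic -> D2 \is monic -> h1 \is monic ->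
  h2 \is monic -> squarefree_poly h1 -> squarefree_poly h2 ->
  D1 ^+ 2 * h1 = D2 ^+ 2 * h2 -> D1 = D2 /\ h1 = h2.
Proof.
have [n lt] := ubnP (size D1); elim: n D1 D2 lt => // n IHn D1 D2 lt.
move=> m1 m2 mh1 mh2 s1 s2 E.
case: (leqP (size D1) 1) => sD1.
  have e1 := monic_le1 m1 sD1; rewrite e1 expr1n mul1r in E.
  have : D2 * D2 %| h1 by rewrite E -expr2 dvdp_mulr.
  move/s1 => sD2; have e2 := monic_le1 m2 sD2.
  by rewrite e2 expr1n mul1r in E; rewrite e1 e2.
have [p [mp ip pD1]] := irr_factor sD1.
have p0 := irredp_neq0 ip.
have pD2 : p %| D2.
  apply: (sq_prime s2 ip); rewrite -E -(divpK pD1); apply: dvdp_mulr.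
  by rewrite exprMn dvdp_mull // expr2.
have E1 := divpK pD1; have E2 := divpK pD2.
set E1' := D1 %/ p in E1; set E2' := D2 %/ p in E2.
have mE1 : E1' \is monic by move: m1; rewrite -E1 monicMr.
have mE2 : E2' \is monic by move: m2; rewrite -E2 monicMr.
have E' : E1' ^+ 2 * h1 = E2' ^+ 2 * h2.
  apply: (mulIf (mulf_neq0 p0 p0)).
  have -> : E1' ^+ 2 * h1 * (p * p) = D1 ^+ 2 * h1 by rewrite -E1; ring.
  by rewrite E -E2; ring.
have ltE : (size E1' < n)%N.
  have : (size E1' < size D1)%N.
    by rewrite -E1; apply: size_ltM; [apply: monic_neq0 | case: ip].
  by move=> H1; apply: leq_trans H1 _; rewrite -ltnS.
have [e1 e2] := IHn E1' E2' ltE mE1 mE2 mh1 mh2 s1 s2 E'.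
by split=> //; rewrite -E1 -E2 e1.
Qed.


Definition admS (s : F) f := [/\ f \is monic, squarefree_poly f &
  forall p, p \is monic -> irreducible_poly p -> p %| f -> exists g, p %| g ^+ 2 - s *: 'X].

Lemma admS1 f : admissible f <-> admS 1 f.
Proof.
split.
  case=> a [b c]; split=> // p mp ip pf; have [g pg] := c p mp ip pf.
  by exists g; rewrite scale1r.
case=> a b c; split=> //; split=> // p mp ip pf; have [g pg] := c p mp ip pf.
by exists g; rewrite scale1r in pg.
Qed.

Lemma admSN1 f : admS (-1) f <->
  [/\ f \is monic, squarefree_poly f &
  forall p, p \is monic -> irreducible_poly p -> p %| f -> exists g, p %| g ^+ 2 + 'X].
Proof.
have E : forall g : {poly F}, g ^+ 2 - (-1) *: 'X = g ^+ 2 + 'X by move=> g; rewrite scaleN1r opprK.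
split; case=> a b c; split=> // p mp ip pf; have [g pg] := c p mp ip pf; exists g; by rewrite ?E in pg *.
Qed.

Definition tau f := f \Po (- 'X).
Definition sig f := (-1) ^+ (size f).-1 *: tau f.

Lemma size_NX : size (- 'X : {poly F}) = 2%N.
Proof. by rewrite size_polyN size_polyX. Qed.

Lemma size_tau f : size (tau f) = size f.
Proof. exact: size_comp_poly2 size_NX. Qed.

Lemma tauK f : tau (tau f) = f.
Proof.
rewrite /tau -comp_polyA.
have -> : (- 'X) \Po (- 'X) = 'X :> {poly F} by rewrite raddfN /= comp_polyX opprK.
exact: comp_polyXr.
Qed.

Lemma tau_dvd p f : p %| f -> tau p %| tau f.
Proof. exact: dvdp_comp_poly. Qed.

Lemma tau_dvdE p f : (tau p %| tau f) = (p %| f).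
Proof. by apply/idP/idP => [/tau_dvd|/tau_dvd//]; rewrite !tauK. Qed.

Lemma sign_neq0 k : (-1) ^+ k != 0 :> F.
Proof. by rewrite signr_eq0. Qed.

Lemma size_sig f : size (sig f) = size f.
Proof. by rewrite size_scale ?sign_neq0 // size_tau. Qed.

Lemma eqp_sig f : sig f %= tau f.
Proof. exact: eqp_scale (sign_neq0 _). Qed.

Lemma sigK f : sig (sig f) = f.
Proof.
rewrite /sig size_sig /tau comp_polyZ -/(tau _) tauK scalerA -exprMn.
by rewrite mulrNN mulr1 expr1n scale1r.
Qed.

Lemma sig_monic f : f \is monic -> sig f \is monic.
Proof.
move=> mf; rewrite monicE lead_coefZ /tau lead_coef_comp ?size_NX //.
rewrite lead_coefN lead_coefX (monicP mf) mul1r -exprMn mulrNN mulr1 expr1n.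
by [].
Qed.

Lemma tau_eqp p q : p %= q -> tau p %= tau q.
Proof. by rewrite /eqp !tau_dvdE. Qed.

Lemma irr_sig p : irreducible_poly p -> irreducible_poly (sig p).
Proof.
move=> ip; apply: irr_eqp (_ : irreducible_poly (tau p)) (eqp_sig p).
case: ip => sp ip; split; first by rewrite size_tau.
move=> q sq qp; rewrite -[q]tauK; apply: tau_eqp; apply: ip.
  by rewrite size_tau.
by rewrite -tau_dvdE tauK.
Qed.

Lemma tau_sqr g : tau (g ^+ 2) = tau g ^+ 2.
Proof. by rewrite /tau !expr2 comp_polyM. Qed.

Lemma admS_sig s f : admS s f -> admS (-s) (sig f).
Proof.
case=> mf sqf H; split; first exact: sig_monic.
  move=> g gg; rewrite -(size_tau g); apply: sqf.
  rewrite -[f]tauK /tau -comp_polyM -/(tau _) tau_dvdE.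
  by rewrite -(eqp_dvdr _ (eqp_sig f)).
move=> p mp ip pf.
have ip' := irr_sig ip; have mp' := sig_monic mp.
have pf' : sig p %| f.
  rewrite (eqp_dvdl _ (eqp_sig p)) -[f]tauK tau_dvdE.
  by rewrite -(eqp_dvdr _ (eqp_sig f)).
have [g pg] := H _ mp' ip' pf'.
exists (tau g).
have : tau (sig p) %| tau (g ^+ 2 - s *: 'X) := tau_dvd pg.
have -> : tau (g ^+ 2 - s *: 'X) = tau g ^+ 2 - (- s) *: 'X.
  by rewrite /tau comp_polyB comp_polyZ -/(tau _) tau_sqr /tau comp_polyX scalerN scaleNr.
have e : tau (sig p) %= p.
  rewrite /sig /tau comp_polyZ -/(tau _) tauK; exact: eqp_scale (sign_neq0 _).
by rewrite (eqp_dvdl _ e).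
Qed.

Lemma irr_dvdX p : irreducible_poly p -> p %| 'X -> p %= 'X.
Proof.
move=> ip pX; rewrite -dvdp_size_eqp // size_polyX.
have X0 : ('X : {poly F}) != 0 by rewrite polyX_eq0.
have := dvdp_leq X0 pX; rewrite size_polyX.
case: ip => sp _; move: sp.
have H : forall x : nat, (1 < x -> x <= 2 -> x == 2)%N by move=> *; lia.
exact: H.
Qed.

Lemma admX s g : g \is monic -> g.[0] != 0 -> admS s (g * 'X) <-> admS s g.
Proof.
move=> mg g0; have gX : ~~ ('X %| g).
  by rewrite -[X in X %| _]subr0 -polyC0 dvdp_XsubCl rootE.
split.
  case=> mgX sq H; split => //.
    by move=> h hh; apply: sq; apply: dvdp_mulr.
  by move=> p mp ip pg; apply: H => //; apply: dvdp_mulr.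
case=> _ sq H; split.
- by rewrite monicMl // monicX.
- move=> h hh; rewrite leqNgt; apply/negP => sh.
  have [r [mr ir rh]] := irr_factor sh.
  have rr : r * r %| g * 'X := dvdp_trans (dvdp_mul rh rh) hh.
  case rX: (r %| 'X).
    have e := irr_dvdX ir rX.
    move: rr; rewrite (eqp_dvdl _ (eqp_trans (eqp_mull r e) (eqp_mulr 'X e))).
    by rewrite dvdp_mul2r ?polyX_eq0 // (negbTE gX).
  have cr : coprimep r 'X by rewrite irreducible_poly_coprime // rX.
  have crr : coprimep (r * r) 'X by rewrite coprimepMl cr.
  rewrite (Gauss_dvdpl g crr) in rr.
  by have := sq r rr; case: ir => sr _; rewrite leqNgt sr.
- move=> p mp ip pgX; case/orP: (irr_dvdM ip pgX) => [pg|pX]; first exact: H.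
  have e := irr_dvdX ip pX.
  have -> : p = 'X by apply/eqP; rewrite -eqp_monic // monicX.
  exists 0; have -> : (0 : {poly F}) ^+ 2 - s *: 'X = (- s)%:P * 'X.
    by rewrite expr0n /= sub0r mul_polyC scaleNr.
  exact: dvdp_mull.
Qed.


Lemma decP_and (P : Prop) (b : bool) : decP (P /\ b) = decP P && b.
Proof.
apply/idP/idP.
  by move/decPP => [h1 h2]; apply/andP; split => //; apply/decPP.
by case/andP => /decPP h1 h2; apply/decPP.
Qed.

Definition cons0 m (c : m.-tuple F) : m.+1.-tuple F := [tuple of 0 :: c].

Lemma cons0_inj m : injective (@cons0 m).
Proof. by move=> x y /(congr1 val) [] /val_inj. Qed.

Lemma mpoly_cons0 m (c : m.-tuple F) : mpoly (cons0 c) = mpoly c * 'X.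
Proof. by rewrite /mpoly /= cons_poly_def polyC0 addr0. Qed.

Lemma part1 m : Sq F m.+1 = (Soq F m.+1 + Soq F m)%N.
Proof.
rewrite /Sq /Soq.
set A := [set c : m.+1.-tuple F | _].
rewrite -(cardsID [set c : m.+1.-tuple F | (mpoly c).[0] != 0] A).
congr (_ + _)%N.
  by apply: eq_card => c; rewrite !inE decP_and.
rewrite -(card_imset _ (@cons0_inj m)); apply: eq_card => c.
rewrite !inE; apply/idP/imsetP.
  case/andP => /negPn/eqP c0 /decPP /admS1 ac.
  have hc : thead c = 0.
    by rewrite /thead (tnth_nth 0) /= (coef_mpoly_small c (ltn0Sn m)) -horner_coef0 c0.
  have Ec : c = cons0 [tuple of behead c] by rewrite [LHS]tuple_eta hc.
  exists [tuple of behead c] => //.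
  rewrite Ec mpoly_cons0 in ac.
  set b := mpoly [tuple of behead c] in ac *.
  have b0 : b.[0] != 0.
    apply/negP => /eqP b0; case: ac => _ sq _.
    have : 'X * 'X %| b * 'X.
      rewrite dvdp_mul2r ?polyX_eq0 // -[X in X %| _]subr0 -polyC0 dvdp_XsubCl.
      by rewrite rootE b0.
    by move/sq; rewrite size_polyX.
  rewrite inE; apply/decPP; split => //; apply/admS1.
  by apply/(admX _ (mpoly_monic _) b0).
case=> c'; rewrite inE => /decPP [ac' c'0] ->.
rewrite mpoly_cons0 hornerMX mulr0 eqxx /=; apply/decPP/admS1.
by apply/(admX _ (mpoly_monic _) c'0)/admS1.
Qed.


Definition Sp k := #|[set c : k.-tuple F | decP (admS (-1) (mpoly c))]|.

Lemma Sp_eq k : Sp k = Sq F k.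
Proof.
pose psi (c : k.-tuple F) := tup k (sig (mpoly c)).
have msig c : mpoly (psi c) = sig (mpoly c).
  by rewrite tupK ?sig_monic ?mpoly_monic // size_sig size_mpoly.
have psiK : involutive psi by move=> c; rewrite /psi msig sigK mpolyK.
rewrite /Sp /Sq -(card_preimset _ (inv_inj psiK)); apply: eq_card => c.
rewrite !inE msig; apply/decPP/decPP => H.
  by apply/admS1; have := admS_sig H; rewrite opprK sigK.
exact: admS_sig ((admS1 _).1 H).
Qed.

Definition Bs n := [set c : n.-tuple F | decP (is_sum_AB (mpoly c))].

Definition Im n (i : nat) : {set n.-tuple F} :=
  [set tup n (mpoly x.1 ^+ 2 * mpoly x.2) | x in setX [set: i.-tuple F]
     [set c : (n - i.*2).-tuple F | decP (admS (-1) (mpoly c))]].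

Lemma size_mulM p q : p \is monic -> q \is monic -> size (p * q) = (size p + size q).-1.
Proof. by move=> mp mq; rewrite size_Mmonic // monic_neq0. Qed.

Lemma D2h_monic i k (d : i.-tuple F) (c : k.-tuple F) : mpoly d ^+ 2 * mpoly c \is monic.
Proof. by rewrite monicMl ?mpoly_monic // monic_exp // mpoly_monic. Qed.

Lemma size_D2h i k (d : i.-tuple F) (c : k.-tuple F) :
  size (mpoly d ^+ 2 * mpoly c) = (i.*2 + k).+1.
Proof.
rewrite size_mulM ?monic_exp ?mpoly_monic // expr2 size_mulM ?mpoly_monic //.
rewrite !size_mpoly; lia.
Qed.

Lemma Im_sub n i c : c \in Im n i -> (i.*2 <= n)%N -> c \in Bs n.
Proof.
case/imsetP => [[d h]] /setXP [_]; rewrite inE => /decPP /admSN1 [mh sqh Hh] -> /= le.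
rewrite inE; apply/decPP; rewrite tupK ?D2h_monic // ?size_D2h ?subnKC //.
apply: rep_mul; last exact: rep_adm.
by exists (mpoly d), 0; rewrite expr0n /= mulr0 addr0.
Qed.

Lemma mpoly_Im n i c : c \in Im n i -> (i.*2 <= n)%N ->
  exists d : i.-tuple F, exists h : {poly F},
  [/\ h \is monic, squarefree_poly h & mpoly c = mpoly d ^+ 2 * h].
Proof.
case/imsetP => [[d h]] /setXP [_]; rewrite inE => /decPP /admSN1 [mh sqh Hh] -> /= le.
exists d, (mpoly h); split => //.
by rewrite tupK ?D2h_monic // ?size_D2h ?subnKC.
Qed.

Lemma Im_uniq n i j c : c \in Im n i -> c \in Im n j ->
  (i.*2 <= n)%N -> (j.*2 <= n)%N -> i = j.
Proof.
move=> ci cj li lj.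
have [d1 [h1 [m1 s1 E1]]] := mpoly_Im ci li.
have [d2 [h2 [m2 s2 E2]]] := mpoly_Im cj lj.
have E : mpoly d1 ^+ 2 * h1 = mpoly d2 ^+ 2 * h2 by rewrite -E1 -E2.
have [e _] := sqf_uniq (mpoly_monic d1) (mpoly_monic d2) m1 m2 s1 s2 E.
by have := congr1 (fun p : {poly F} => size p) e; rewrite /= !size_mpoly => -[].
Qed.

Lemma Im_card n (i : nat) : (i.*2 <= n)%N -> #|Im n i| = (#|F| ^ i * Sp (n - i.*2))%N.
Proof.
move=> le; rewrite card_in_imset ?cardsX ?cardsT ?card_tuple //.
move=> [d1 h1] [d2 h2] /setXP [_]; rewrite inE => /decPP /admSN1 [m1 s1 _].
move=> /setXP [_]; rewrite inE => /decPP /admSN1 [m2 s2 _] /= E.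
have E' := congr1 (@mpoly F n) E; rewrite !tupK ?D2h_monic ?size_D2h ?subnKC // in E'.
have [e1 e2] := sqf_uniq (mpoly_monic d1) (mpoly_monic d2) m1 m2 s1 s2 E'.
by rewrite -(mpolyK d1) -(mpolyK h1) e1 e2 !mpolyK.
Qed.

Lemma Im_exist n c : c \in Bs n -> exists i : 'I_(n./2.+1), c \in Im n i.
Proof.
rewrite inE => /decPP rf.
have mf := mpoly_monic c; have f0 := monic_neq0 mf.
have [D [h [mD mh sqh Ef]]] := sqf_decomp mf.
have admh : admS (-1) h.
  by apply/admSN1; split => // p mp ip ph; exact: (rep_split rf f0 Ef sqh ip ph).
set i := (size D).-1.
have sD : size D = i.+1 by rewrite prednK // size_poly_gt0 monic_neq0.
have h0 : (0 < size h)%N by rewrite size_poly_gt0 monic_neq0.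
have sf : size (mpoly c) = (size D + size D + size h).-2.
  rewrite Ef size_mulM ?monic_exp // expr2 size_mulM //.
  have H : forall x y : nat, (0 < x -> 0 < y -> ((x + x).-1 + y).-1 = (x + x + y).-2)%N.
    by move=> *; lia.
  by apply: H; rewrite ?sD.
rewrite size_mpoly sD in sf.
have le : (i.*2 <= n)%N by move: sf h0; lia.
have sh : size h = (n - i.*2).+1 by move: sf h0; lia.
have lt : (i < n./2.+1)%N by rewrite ltnS -[i]doubleK half_leq.
exists (Ordinal lt); apply/imsetP; exists (tup i D, tup (n - i.*2) h).
  apply/setXP; split; first by rewrite inE.
  by rewrite inE tupK //; apply/decPP.
by rewrite /= !tupK // -Ef mpolyK.
Qed.

Lemma part2 n : Bq F n = (\sum_(i < n./2.+1) #|F| ^ i * Sq F (n - i.*2))%N.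
Proof.
have hi : forall i : 'I_(n./2.+1), (i.*2 <= n)%N.
  move=> [i /= lt]; have := odd_double_half n; move: lt.
  set h := n./2; case: (odd n) => /=; lia.
transitivity (\sum_(i < n./2.+1) #|Im n i|)%N; last first.
  by apply: eq_bigr => i _; rewrite Im_card // Sp_eq.
have -> : Bq F n = (\sum_(c in Bs n) 1)%N by rewrite sum1_card.
rewrite (eq_bigr (fun c => \sum_(i < n./2.+1) (c \in Im n i : nat))%N); last first.
  move=> c hc; have [i0 hi0] := Im_exist hc.
  rewrite (bigD1 i0) //= hi0 big1 ?addn0 // => j nj.
  case: (boolP (c \in Im n j)) => //= hj; case/eqP: nj; apply: val_inj.
  exact: Im_uniq hj hi0 (hi _) (hi _).
rewrite exchange_big /=; apply: eq_bigr => i _.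
rewrite -sum1_card big_mkcond [RHS]big_mkcond; apply: eq_bigr => c _ /=.
case hI: (c \in Im n i); first by rewrite (Im_sub hI (hi i)).
by case: (c \in Bs n).
Qed.

End Work.

Theorem mainTheorem4 (F : finFieldType) (n : nat) :
  odd #|F| -> (0 < n)%N ->
  Sq F n = (Soq F n + Soq F n.-1)%N /\
  Bq F n = (\sum_(i < n./2.+1) #|F| ^ i * Sq F (n - i.*2))%N.
Proof.
move=> _; case: n => // m _; split; first exact: part1.
exact: part2.
Qed.
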